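(* Let $I$ be an ideal of a Noetherian ring $A$. Then $I_>\subseteq{}^*I$.
   Context: For $a\in A$, $\operatorname{ord}_I(a)=n$ if $a\in I^n\setminus I^{n+1}$ and $\infty$ if $a\in\bigcap_n I^n$; $\overline{v}_I(a)=\lim_{n\to\infty}\operatorname{ord}_I(a^n)/n$ (the limit exists, possibly $\infty$); $I_>=\{a\in A\mid\overline{v}_I(a)>1\}$. ${}^*I$ is the weak subintegral closure of $I$: $b\in A$ lies in ${}^*I$ if there exist $q\in\mathbb{N}$ and $a_i\in I^i$ ($1\le i\le 2q+1$) with $b^n+\sum_{i=1}^n\binom{n}{i}a_ib^{n-i}=0$ for all $q+1\le n\le 2q+1$. *)

(* Defs.v *)
From HB Require Import structures.
From mathcomp Require Import all_boot all_order all_algebra.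
From mathcomp Require Import all_classical all_reals.
From mathcomp Require Import ereal topology sequences.
From mathcomp Require Import Rstruct Rstruct_topology.
Set Implicit Arguments. Unset Strict Implicit. Unset Printing Implicit Defensive.
Import Order.TTheory GRing.Theory Num.Theory.
Local Open Scope ring_scope.
Local Open Scope classical_set_scope.

Section IdealDefs.
Variable A : comPzRingType.

Definition is_ideal (I : set A) : Prop :=
  I 0 /\ (forall x y, I x -> I y -> I (x + y)) /\ (forall r x, I x -> I (r * x)).

Definition noetherian : Prop :=
  forall J : nat -> set A, (forall k, is_ideal (J k)) ->
    (forall k, J k `<=` J k.+1) ->
    exists N, forall k, (N <= k)%N -> J k = J N.

Fixpoint ideal_pow (I : set A) (n : nat) : set A :=
  match n with
  | 0 => setT
  | n'.+1 => fun z => exists s : seq (A * A),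
      (forall p, p \in s -> I p.1 /\ ideal_pow I n' p.2) /\
      z = \sum_(p <- s) p.1 * p.2
  end.

(* ord_I(a) = n if a in I^n \ I^(n+1), +oo if a in all I^n.
   Since I^n is decreasing, this is the supremum of {n | a in I^n}. *)
Definition ordI (I : set A) (a : A) : \bar Rdefinitions.R :=
  ereal_sup [set (n%:R)%:E | n in [set n : nat | ideal_pow I n a]].

Definition vbarI (I : set A) (a : A) : \bar Rdefinitions.R :=
  lim ((fun n : nat => ordI I (a ^+ n.+1) * ((n.+1)%:R^-1)%:E)%E @ \oo).

Definition I_gt (I : set A) : set A := [set a | (1 < vbarI I a)%E].

Definition wsi_closure (I : set A) : set A :=
  [set b | exists (q : nat) (a : nat -> A),
     (forall i, (1 <= i <= 2 * q + 1)%N -> ideal_pow I i (a i)) /\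
     (forall n, (q + 1 <= n <= 2 * q + 1)%N ->
        b ^+ n + \sum_(1 <= i < n.+1) (a i * b ^+ (n - i)) *+ 'C(n, i) = 0)].

End IdealDefs.

(* Main.v *)
Require Import Defs.
From mathcomp Require Import all_boot all_order all_algebra.
From mathcomp Require Import all_classical all_reals ereal topology sequences normedtype.
From mathcomp Require Import Rstruct Rstruct_topology.
From mathcomp Require Import zify.
Import Order.TTheory GRing.Theory Num.Theory.
Local Open Scope ring_scope.

Section Alg.
Variable A : comPzRingType.
Variable I : set A.

Lemma pow_dec k : forall z, ideal_pow I k.+1 z -> ideal_pow I k z.
Proof.
elim: k => [//|k IH] z [s [Hs ->]].
exists s; split => // p /Hs [H1 H2]; split => //; exact: IH.
Qed.

Lemma pow_mono j k : (j <= k)%N -> forall z, ideal_pow I k z -> ideal_pow I j z.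
Proof.
move=> /subnK <-; elim: (k - j)%N => [//|d IH] z H.
apply: IH; rewrite addSn in H; exact: pow_dec.
Qed.

Lemma pow0 k : ideal_pow I k.+1 0.
Proof. by exists [::]; rewrite big_nil. Qed.

Lemma pow_scal k r z : is_ideal I -> ideal_pow I k.+1 z -> ideal_pow I k.+1 (r * z).
Proof.
move=> [_ [_ HI]] [s [Hs ->]].
exists (map (fun p => (r * p.1, p.2)) s); split.
  move=> p /mapP [p' /Hs [H1 H2] ->] /=; split => //; exact: HI.
by rewrite big_map mulr_sumr; apply: eq_bigr => p _ /=; rewrite mulrA.
Qed.
End Alg.

Lemma int_seq (q m : nat) : exists c : nat -> int,
  (forall i, (1 <= i <= q)%N -> c i = 0) /\
  (forall n, (q + 1 <= n < q + 1 + m)%N -> 1 + \sum_(1 <= i < n.+1) c i *+ 'C(n, i) = 0).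
Proof.
elim: m => [|m [c [Hc1 Hc2]]].
  exists (fun _ => 0); split => // n; rewrite addn0 => /andP [H1 H2].
  by move: (leq_trans H2 H1); rewrite ltnn.
pose n0 := (q + 1 + m)%N.
pose v := - (1 + \sum_(1 <= i < n0) c i *+ 'C(n0, i)).
exists (fun i => if i == n0 then v else c i); split.
  move=> i /[dup] Hi /andP [H1 H2]; have -> : (i == n0) = false.
    by apply/negbTE; rewrite neq_ltn; apply/orP; left; rewrite /n0; lia.
  exact: Hc1 Hi.
move=> n /andP [H1 H2].
have [Hn | Hn] := ltnP n n0.
  rewrite -[RHS](Hc2 n); last by apply/andP; split => //.
  congr (_ + _); apply: eq_big_nat => i /andP [_ Hi].
  have -> : (i == n0) = false by apply/negbTE; rewrite neq_ltn; apply/orP; left; lia.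
  done.
have -> : n = n0 by rewrite /n0 in Hn *; lia.
rewrite big_nat_recr /=; last by rewrite /n0; lia.
rewrite eqxx binn mulr1n.
rewrite (@eq_big_nat _ _ _ 1 n0 _ (fun i => c i *+ 'C(n0, i))); last first.
  move=> i /andP [_ Hi]; by rewrite (ltn_eqF Hi).
by rewrite /v addrA addrN.
Qed.

Local Open Scope classical_set_scope.

Theorem proposition4p4 (A : comPzRingType) (I : set A) :
  noetherian A -> is_ideal I -> (I_gt I `<=` wsi_closure I)%classic.
Proof.
move=> _ HI b Hb.
have [N HN] : exists N, forall n, (N <= n)%N -> ideal_pow I n.+1 (b ^+ n.+1).
  rewrite /I_gt /= /vbarI in Hb.
  set u := (fun n : nat => _) in Hb.
  have Hc : cvgn u.
    apply: contrapT => Hn.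
    move: Hb; rewrite /lim /lim_in getPN; first by rewrite lte_fin ltr10.
    move=> l Hl; apply: Hn; have H := @getI _ (fun l0 => nbhs (u x @[x --> \oo]) --> l0) l Hl; exact: H.
  have := Hc _ (open_ereal_gt' Hb).
  move=> [N _ HN]; exists N => n Hn.
  have Hlt : ((n.+1%:R)%:E < ordI I (b ^+ n.+1))%E.
    rewrite ltNge; apply/negP => Hle.
    have := HN n Hn; rewrite /= /u ltNge => /negP; apply.
    apply: (le_trans (lee_wpmul2r _ Hle)); first by rewrite lee_fin invr_ge0.
    by rewrite -EFinM mulfV // pnatr_eq0.
  have [y [m Hm <-]] := ereal_sup_gt Hlt.
  rewrite lte_fin ltr_nat => Hnm.
  exact: (@pow_mono _ I _ _ (ltnW Hnm) _ Hm).
have [c [Hc1 Hc2]] := int_seq N.+1 N.+2.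
exists N.+1, (fun i => (c i)%:~R * b ^+ i); split.
  move=> [//|k] /andP [_ Hk].
  have [Hkq|Hkq] := leqP k.+1 N.+1.
    rewrite Hc1 ?mul0r; first exact: pow0.
    by apply/andP.
  apply: pow_scal => //; apply: HN; lia.
move=> n /andP [Hn1 Hn2].
have Hb2 : (N.+1 + 1 <= n < N.+1 + 1 + N.+2)%N by apply/andP; split; lia.
have Heq := Hc2 n Hb2.
rewrite (@eq_big_nat _ _ _ 1 n.+1 _ (fun i => (c i *+ 'C(n, i))%:~R * b ^+ n)); last first.
  move=> i /andP [_ Hi].
  have Hin : (i <= n)%N by lia.
  rewrite -mulrA -exprD (subnKC Hin).
  by rewrite -mulrnAl rmorphMn.
rewrite -mulr_suml -[X in X + _]mul1r -mulrDl.
by rewrite -rmorph_sum -(rmorph1 (intr : int -> A)) -rmorphD Heq rmorph0 mul0r.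
Qed.
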